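(* Let $A\ge\chi^2\rho^2$ and $\Delta t>0$. Let $(\phi^k)_{k\ge0}\subset\mathcal{C}_{\rm per}$ be grid functions with $0<\phi^k_{i,j}<1/\rho$ for all $k,i,j$, such that $\phi^1=\phi^0$ and, for every $k\ge1$, $\phi^{k+1}$ together with some $\mu^{k+1}\in\mathcal{C}_{\rm per}$ satisfies $$\frac{3\phi^{k+1}-4\phi^k+\phi^{k-1}}{2\Delta t}=\Delta_h\mu^{k+1},$$ $$\mu^{k+1}=S'(\phi^{k+1})+\kappa'(\phi^{k+1})\big(a_x((D_x\phi^{k+1})^2)+a_y((D_y\phi^{k+1})^2)\big)-2d_x(A_x\kappa(\phi^{k+1})D_x\phi^{k+1})-2d_y(A_y\kappa(\phi^{k+1})D_y\phi^{k+1})+H'(2\phi^k-\phi^{k-1})-A\Delta t\,\Delta_h(\phi^{k+1}-\phi^k).$$ For $n\ge1$ define the modified discrete energy $$E_h(\phi^{n+1},\phi^n):=F(\phi^{n+1})+\frac{1}{4\Delta t}\|\phi^{n+1}-\phi^n\|_{-1,h}^2+\chi\rho\|\phi^{n+1}-\phi^n\|_2^2.$$ Then for every $n\ge1$, $$E_h(\phi^{n+1},\phi^n)+\Delta t\Big(1-\frac{\chi^2\rho^2}{A}\Big)\Big\|\frac{\phi^{n+1}-\phi^n}{\Delta t}\Big\|_{-1,h}^2\le E_h(\phi^n,\phi^{n-1}).$$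
   Context: Parameters: $N_1,N_2,\chi>0$, $\alpha=\pi(\sqrt{N_2/\pi}+N_1/2)^2$, $\beta=\alpha/\sqrt{\pi N_2}$, $\tau=\sqrt{\pi N_2}N_1$, $\rho=1+N_2/\tau$. $S(\phi)=\frac{\phi}{\tau}\ln\frac{\alpha\phi}{\tau}+\frac{\phi}{N_1}\ln\frac{\beta\phi}{\tau}+(1-\rho\phi)\ln(1-\rho\phi)$, $S'(\phi)=(\frac1\tau+\frac1{N_1})\ln\phi-\rho\ln(1-\rho\phi)$ (additive constants omitted), $H(\phi)=\chi\phi(1-\rho\phi)$, $H'(\phi)=-2\chi\rho\phi$, $\kappa(\phi)=\frac1{36\phi(1-\phi)}$, $\kappa'(\phi)=\frac{2\phi-1}{36\phi^2(1-\phi)^2}$. Grid: $\Omega=(0,L)^2$, $h=L/N$, $\mathcal{C}_{\rm per}$ = $N$-periodic cell-centered grid functions. $D_x\nu_{i+1/2,j}=(\nu_{i+1,j}-\nu_{i,j})/h$, $A_x\nu_{i+1/2,j}=(\nu_{i+1,j}+\nu_{i,j})/2$; for edge functions $a_xf_{i,j}=(f_{i+1/2,j}+f_{i-1/2,j})/2$, $d_xf_{i,j}=(f_{i+1/2,j}-f_{i-1/2,j})/h$; analogously in $y$; $\Delta_h=d_xD_x+d_yD_y$. Inner product $(\nu,\xi)=h^2\sum_{i,j=1}^N\nu_{i,j}\xi_{i,j}$, $\|\nu\|_2^2=(\nu,\nu)$. For $\nu$ with zero mean, $\|\nu\|_{-1,h}^2=(\nu,(-\Delta_h)^{-1}\nu)$,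 with $(-\Delta_h)^{-1}\nu$ the unique zero-mean solution $\psi$ of $-\Delta_h\psi=\nu$. Discrete energy $F(\phi)=h^2\sum_{i,j=1}^N\big(S(\phi_{i,j})+H(\phi_{i,j})+\kappa(\phi_{i,j})(a_x((D_x\phi)^2)_{i,j}+a_y((D_y\phi)^2)_{i,j})\big)$. (The scheme conserves mass, so $\phi^{n+1}-\phi^n$ has zero mean.) *)

(* Defs.v *)
From HB Require Import structures.
From mathcomp Require Import all_boot all_order all_algebra.
From mathcomp Require Import all_classical all_reals.
From mathcomp Require Import exp trigo.
From Stdlib Require Import ClassicalEpsilon.
Set Implicit Arguments. Unset Strict Implicit. Unset Printing Implicit Defensive.
Import Order.TTheory GRing.Theory Num.Theory.
Local Open Scope ring_scope.

Section Grid.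
Variable R : realType.

(* N-periodic cell-centered grid functions on (0,L)^2: values at cells (i,j),
   i,j in 'I_N (0-based); periodicity via cyclic successor/predecessor. *)
Definition grid (N : nat) := 'I_N -> 'I_N -> R.

Variables (N : nat) (L : R).
Definition hh : R := L / N%:R.

(* Edge functions: value at edge (i+1/2, j) stored at index (i, j) (x-edges),
   value at edge (i, j+1/2) stored at index (i, j) (y-edges). *)
Definition Dx (v : grid N) : grid N := fun i j => (v (ordS i) j - v i j) / hh.
Definition Dy (v : grid N) : grid N := fun i j => (v i (ordS j) - v i j) / hh.
Definition Ax (v : grid N) : grid N := fun i j => (v (ordS i) j + v i j) / 2.
Definition Ay (v : grid N) : grid N := fun i j => (v i (ordS j) + v i j) / 2.
Definition ax (f : grid N) : grid N := fun i j => (f i j + f (ord_pred i) j) / 2.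
Definition ay (f : grid N) : grid N := fun i j => (f i j + f i (ord_pred j)) / 2.
Definition dx (f : grid N) : grid N := fun i j => (f i j - f (ord_pred i) j) / hh.
Definition dy (f : grid N) : grid N := fun i j => (f i j - f i (ord_pred j)) / hh.
Definition lap (v : grid N) : grid N := fun i j => dx (Dx v) i j + dy (Dy v) i j.

Definition ip (u v : grid N) : R := hh ^+ 2 * \sum_(i < N) \sum_(j < N) u i j * v i j.
Definition norm2sq (v : grid N) : R := ip v v.

Definition inv_neg_lap (v : grid N) : grid N :=
  epsilon (inhabits (fun _ _ => 0))
    (fun psi : grid N => (forall i j, - lap psi i j = v i j) /\
                         \sum_(i < N) \sum_(j < N) psi i j = 0).
Definition normm1sq (v : grid N) : R := ip v (inv_neg_lap v).

Variables (N1 N2 chi : R).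
Definition alpha : R := pi * (Num.sqrt (N2 / pi) + N1 / 2) ^+ 2.
Definition beta : R := alpha / Num.sqrt (pi * N2).
Definition tau : R := Num.sqrt (pi * N2) * N1.
Definition rho : R := 1 + N2 / tau.

Definition Sf (x : R) : R :=
  x / tau * ln (alpha * x / tau) + x / N1 * ln (beta * x / tau)
  + (1 - rho * x) * ln (1 - rho * x).
(* S' with additive constants omitted, as in the paper *)
Definition Sp (x : R) : R := (tau^-1 + N1^-1) * ln x - rho * ln (1 - rho * x).
Definition Hf (x : R) : R := chi * x * (1 - rho * x).
Definition Hp (x : R) : R := - (2 * chi * rho * x).
Definition kap (x : R) : R := (36 * x * (1 - x))^-1.
Definition kapp (x : R) : R := (2 * x - 1) / (36 * x ^+ 2 * (1 - x) ^+ 2).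

Definition gradsq (v : grid N) : grid N :=
  fun i j => ax (fun a b => Dx v a b ^+ 2) i j + ay (fun a b => Dy v a b ^+ 2) i j.

Definition Fenergy (v : grid N) : R :=
  hh ^+ 2 * \sum_(i < N) \sum_(j < N)
    (Sf (v i j) + Hf (v i j) + kap (v i j) * gradsq v i j).

(* chemical potential mu^{k+1} given phi^{k+1} = p1, phi^k = p0, phi^{k-1} = pm *)
Definition chempot (A dt : R) (p1 p0 pm : grid N) : grid N :=
  fun i j =>
    Sp (p1 i j) + kapp (p1 i j) * gradsq p1 i j
    - 2 * dx (fun a b => Ax (fun c d => kap (p1 c d)) a b * Dx p1 a b) i j
    - 2 * dy (fun a b => Ay (fun c d => kap (p1 c d)) a b * Dy p1 a b) i j
    + Hp (2 * p0 i j - pm i j)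
    - A * dt * lap (fun a b => p1 a b - p0 a b) i j.

Definition Eh (dt : R) (p1 p0 : grid N) : R :=
  Fenergy p1 + (4 * dt)^-1 * normm1sq (fun i j => p1 i j - p0 i j)
  + chi * rho * norm2sq (fun i j => p1 i j - p0 i j).

End Grid.

(* Main.v *)
Require Import Defs.
From HB Require Import structures.
From mathcomp Require Import all_boot all_order all_algebra.
From mathcomp Require Import all_classical all_reals.
From mathcomp Require Import exp trigo.
From mathcomp Require Import ring lra.
From Stdlib Require Import ClassicalEpsilon.
Import Order.TTheory GRing.Theory Num.Theory.
Local Open Scope ring_scope.


Section Scalar.
Variable R : realType.

Lemma ln_le_sub1 (x : R) : 0 < x -> ln x <= x - 1.
Proof. move=> x0; have := expR_ge1Dx (ln x); rewrite lnK ?posrE //; lra. Qed.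

Lemma xlnx_tangent (a b : R) : 0 < a -> 0 < b -> a * ln a - b * ln b <= (ln a + 1) * (a - b).
Proof.
move=> a0 b0.
have h1 := ln_le_sub1 (a / b) (divr_gt0 a0 b0).
rewrite ln_div ?posrE // in h1.
have h2 : b * (ln a - ln b) <= b * (a / b - 1) by rewrite ler_pM2l.
have e : b * (a / b - 1) = a - b by field; rewrite gt_eqF.
rewrite e in h2; lra.
Qed.

Lemma kap_tangent (x x' y y' : R) : 0 < x < 1 -> 0 < x' < 1 ->
  kap x * y ^+ 2 - kap x' * y' ^+ 2 <= kapp x * y ^+ 2 * (x - x') + 2 * kap x * y * (y - y').
Proof.
move=> /andP[x0 x1] /andP[x'0 x'1].
have e : kapp x * y ^+ 2 * (x - x') + 2 * kap x * y * (y - y') - (kap x * y ^+ 2 - kap x' * y' ^+ 2)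
  = 36^-1 * (x'^-1 * (y' - y * x' / x) ^+ 2 + (1 - x')^-1 * (y' - y * (1 - x') / (1 - x)) ^+ 2).
  rewrite /kap /kapp; field.
  have : x != 0 by rewrite gt_eqF.
  have : x' != 0 by rewrite gt_eqF.
  have : 1 - x != 0 by rewrite gt_eqF // subr_gt0.
  have : 1 - x' != 0 by rewrite gt_eqF // subr_gt0.
  by move=> *; apply/and4P; split.
have : 0 <= 36^-1 * (x'^-1 * (y' - y * x' / x) ^+ 2 + (1 - x')^-1 * (y' - y * (1 - x') / (1 - x)) ^+ 2).
  rewrite mulr_ge0 // ?invr_ge0 // addr_ge0 // mulr_ge0 ?sqr_ge0 // invr_ge0 ?ltW //.
  by rewrite subr_gt0.
rewrite -e; lra.
Qed.

End Scalar.


Section Params.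
Variables (R : realType) (N1 N2 : R).
Hypotheses (hN1 : 0 < N1) (hN2 : 0 < N2).

Lemma tau_gt0 : 0 < tau N1 N2.
Proof. by rewrite /tau mulr_gt0 // sqrtr_gt0 mulr_gt0 // pi_gt0. Qed.

Lemma alpha_gt0 : 0 < alpha N1 N2.
Proof.
rewrite /alpha mulr_gt0 ?pi_gt0 // exprn_gt0 // ltr_wpDl ?sqrtr_ge0 //.
by rewrite divr_gt0.
Qed.

Lemma beta_gt0 : 0 < beta N1 N2.
Proof. by rewrite /beta divr_gt0 ?alpha_gt0 // sqrtr_gt0 mulr_gt0 // pi_gt0. Qed.

Lemma rho_gt1 : 1 < rho N1 N2.
Proof. by rewrite /rho ltrDl divr_gt0 // tau_gt0. Qed.

Definition cS : R := (ln (alpha N1 N2 / tau N1 N2) + 1) / tau N1 N2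
   + (ln (beta N1 N2 / tau N1 N2) + 1) / N1 - rho N1 N2.

Lemma S_tangent (a b : R) : 0 < a -> a < (rho N1 N2)^-1 -> 0 < b -> b < (rho N1 N2)^-1 ->
  Sf N1 N2 a - Sf N1 N2 b <= (Sp N1 N2 a + cS) * (a - b).
Proof.
move=> a0 a1 b0 b1.
have t0 := tau_gt0; have al0 := alpha_gt0; have be0 := beta_gt0; have r1 := rho_gt1.
have r0 : 0 < rho N1 N2 by lra.
have ua : 0 < 1 - rho N1 N2 * a.
  rewrite subr_gt0; have : rho N1 N2 * a < rho N1 N2 * (rho N1 N2)^-1 by rewrite ltr_pM2l.
  by rewrite mulfV ?gt_eqF.
have ub : 0 < 1 - rho N1 N2 * b.
  rewrite subr_gt0; have : rho N1 N2 * b < rho N1 N2 * (rho N1 N2)^-1 by rewrite ltr_pM2l.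
  by rewrite mulfV ?gt_eqF.
have lnA (x : R) : 0 < x -> ln (alpha N1 N2 * x / tau N1 N2) = ln (alpha N1 N2 / tau N1 N2) + ln x.
  move=> x0; rewrite mulrAC [LHS]lnM // posrE; exact: divr_gt0.
have lnB (x : R) : 0 < x -> ln (beta N1 N2 * x / tau N1 N2) = ln (beta N1 N2 / tau N1 N2) + ln x.
  move=> x0; rewrite mulrAC [LHS]lnM // posrE; exact: divr_gt0.
rewrite /Sf /Sp /cS lnA // lnA // lnB // lnB //.
have T1 := @xlnx_tangent _ _ _ a0 b0.
have T2 := @xlnx_tangent _ _ _ ua ub.
have it : 0 <= (tau N1 N2)^-1 by rewrite invr_ge0 ltW.
have iN : 0 <= N1^-1 by rewrite invr_ge0 ltW.
have T1a := ler_wpM2l it T1.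
have T1b := ler_wpM2l iN T1.
set la := ln a in T1 T1a T1b *; set lb := ln b in T1 T1a T1b *.
set lu := ln (1 - rho N1 N2 * a) in T2 *; set lv := ln (1 - rho N1 N2 * b) in T2 *.
set A1 := ln (alpha N1 N2 / tau N1 N2); set B1 := ln (beta N1 N2 / tau N1 N2).
set r := rho N1 N2 in T2 *; set t := tau N1 N2 in T1a *.

lra.
Qed.

End Params.


Section GridLemmas.
Variables (R : realType) (N : nat) (L : R).
Hypotheses (hN : (0 < N)%N) (hL : 0 < L).
Local Notation G := (grid R N).
Local Notation h := (hh N L).

Lemma h_gt0 : 0 < h.
Proof. by rewrite /hh divr_gt0 // ltr0n. Qed.

Definition SS (f : G) : R := \sum_(i < N) \sum_(j < N) f i j.

Lemma SSD (f g : G) : SS (fun i j => f i j + g i j) = SS f + SS g.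
Proof. rewrite /SS -big_split /=; apply: eq_bigr => i _; by rewrite big_split. Qed.

Lemma SSZ c (f : G) : SS (fun i j => c * f i j) = c * SS f.
Proof. rewrite /SS mulr_sumr; apply: eq_bigr => i _; by rewrite mulr_sumr. Qed.

Lemma SSN (f : G) : SS (fun i j => - f i j) = - SS f.
Proof. rewrite -mulN1r -SSZ; congr SS; apply/funext=> i; apply/funext=> j; ring. Qed.

Lemma SSB (f g : G) : SS (fun i j => f i j - g i j) = SS f - SS g.
Proof. by rewrite SSD SSN. Qed.

Lemma SS_le (f g : G) : (forall i j, f i j <= g i j) -> SS f <= SS g.
Proof. move=> H; rewrite /SS; apply: ler_sum => i _; apply: ler_sum => j _; exact: H. Qed.

Lemma SS_Sx (f : G) : SS (fun i j => f (ordS i) j) = SS f.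
Proof. by rewrite /SS [RHS](reindex_inj (@ordS_inj N)). Qed.

Lemma SS_Sy (f : G) : SS (fun i j => f i (ordS j)) = SS f.
Proof. rewrite /SS; apply: eq_bigr => i _; by rewrite [RHS](reindex_inj (@ordS_inj N)). Qed.

Lemma SS_const c : SS (fun _ _ => c) = c * N%:R * N%:R.
Proof.
rewrite /SS; under eq_bigr do rewrite sumr_const card_ord.
by rewrite sumr_const card_ord !mulr_natr.
Qed.

Lemma sbp_x (f g : G) : SS (fun i j => dx L f i j * g i j) = - SS (fun i j => f i j * Dx L g i j).
Proof.
have -> : (fun i j => dx L f i j * g i j) =
  (fun i j => (fun a b => f a b * g a b / h) i j - (fun a b => f (ord_pred a) b * g a b / h) i j).
  by apply/funext=> i; apply/funext=> j; rewrite /dx; ring.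
rewrite SSB -[SS (fun a b => f (ord_pred a) b * g a b / h)]SS_Sx -SSB -SSN.
congr SS; apply/funext=> i; apply/funext=> j; rewrite ordSK /Dx; ring.
Qed.

Lemma sbp_y (f g : G) : SS (fun i j => dy L f i j * g i j) = - SS (fun i j => f i j * Dy L g i j).
Proof.
have -> : (fun i j => dy L f i j * g i j) =
  (fun i j => (fun a b => f a b * g a b / h) i j - (fun a b => f a (ord_pred b) * g a b / h) i j).
  by apply/funext=> i; apply/funext=> j; rewrite /dy; ring.
rewrite SSB -[SS (fun a b => f a (ord_pred b) * g a b / h)]SS_Sy -SSB -SSN.
congr SS; apply/funext=> i; apply/funext=> j; rewrite ordSK /Dy; ring.
Qed.

Definition Gf (f g : G) : R :=
  h ^+ 2 * SS (fun i j => Dx L f i j * Dx L g i j + Dy L f i j * Dy L g i j).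

Lemma ip_neglap (f g : G) : ip L (fun i j => - lap L f i j) g = Gf f g.
Proof.
rewrite /ip /Gf -/(SS _); congr (_ * _).
have -> : (fun i j => - lap L f i j * g i j) =
  (fun i j => - ((fun a b => dx L (Dx L f) a b * g a b) i j + (fun a b => dy L (Dy L f) a b * g a b) i j)).
  by apply/funext=> i; apply/funext=> j; rewrite /lap; ring.
by rewrite SSN SSD sbp_x sbp_y opprD !opprK -SSD.
Qed.

Lemma Gf_sym f g : Gf f g = Gf g f.
Proof. rewrite /Gf; congr (_ * SS _); apply/funext=> i; apply/funext=> j; ring. Qed.

Lemma Gf_ge0 f : 0 <= Gf f f.
Proof.
rewrite /Gf mulr_ge0 ?sqr_ge0 //; rewrite /SS; apply: sumr_ge0 => i _; apply: sumr_ge0 => j _.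
by rewrite addr_ge0 // -expr2 sqr_ge0.
Qed.

Lemma ip_sym (f g : G) : ip L f g = ip L g f.
Proof. rewrite /ip -/(SS _) -/(SS _); congr (_ * SS _); apply/funext=> i; apply/funext=> j; ring. Qed.

Lemma ip_ge0 (f : G) : 0 <= ip L f f.
Proof.
rewrite /ip mulr_ge0 ?sqr_ge0 //; apply: sumr_ge0 => i _; apply: sumr_ge0 => j _.
by rewrite -expr2 sqr_ge0.
Qed.

Lemma SS_lap f : SS (lap L f) = 0.
Proof.
have -> : lap L f = (fun i j => (fun a b => dx L (Dx L f) a b * 1) i j + (fun a b => dy L (Dy L f) a b * 1) i j).
  by apply/funext=> i; apply/funext=> j; rewrite /lap !mulr1.
rewrite SSD sbp_x sbp_y.
have -> : SS (fun i j => Dx L f i j * Dx L (fun _ _ => 1) i j) = SS (fun _ _ => 0 * 0).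
  by congr SS; apply/funext=> i; apply/funext=> j; rewrite /Dx subrr mul0r mulr0 mulr0.
have -> : SS (fun i j => Dy L f i j * Dy L (fun _ _ => 1) i j) = SS (fun _ _ => 0 * 0).
  by congr SS; apply/funext=> i; apply/funext=> j; rewrite /Dy subrr mul0r mulr0 mulr0.
by rewrite SS_const !mul0r oppr0 addr0.
Qed.

Lemma lap_lin a b (f g : G) i j :
  lap L (fun x y => a * f x y + b * g x y) i j = a * lap L f i j + b * lap L g i j.
Proof. rewrite /lap /dx /dy /Dx /Dy; ring. Qed.

Lemma lap_const_shift c (f : G) i j : lap L (fun x y => f x y - c) i j = lap L f i j.
Proof. rewrite /lap /dx /dy /Dx /Dy; ring. Qed.

Lemma inl_spec (v psi : G) : (forall i j, - lap L psi i j = v i j) ->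
  forall i j, - lap L (inv_neg_lap L v) i j = v i j.
Proof.
move=> Hpsi.
pose c := SS psi / (N%:R * N%:R).
have hN0 : (N%:R : R) != 0 by rewrite pnatr_eq0 -lt0n.
have ex : exists p : G, (forall i j, - lap L p i j = v i j) /\ \sum_(i < N) \sum_(j < N) p i j = 0.
  exists (fun x y => psi x y - c); split.
    by move=> i j; rewrite lap_const_shift.
  rewrite -/(SS _) SSB SS_const /c; field; by rewrite hN0.
rewrite /inv_neg_lap.
by case: (epsilon_spec (inhabits (fun _ _ => 0 : R)) _ ex).
Qed.

Lemma normm1_any (v psi : G) : (forall i j, - lap L psi i j = v i j) ->
  normm1sq L v = ip L v psi.
Proof.
move=> Hpsi; have H2 := inl_spec v psi Hpsi.
rewrite /normm1sq.
have -> : ip L v (inv_neg_lap L v) = ip L (fun i j => - lap L psi i j) (inv_neg_lap L v).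
  by congr ip; apply/funext=> i; apply/funext=> j; rewrite Hpsi.
rewrite ip_neglap Gf_sym -ip_neglap.
by congr ip; apply/funext=> i; apply/funext=> j; rewrite H2.
Qed.


Lemma ipE (f g : G) : ip L f g = h ^+ 2 * SS (fun i j => f i j * g i j).
Proof. by []. Qed.

Lemma SS_Px (f : G) : SS (fun i j => f (ord_pred i) j) = SS f.
Proof. by rewrite /SS [RHS](reindex_inj (@ord_pred_inj N)). Qed.

Lemma SS_Py (f : G) : SS (fun i j => f i (ord_pred j)) = SS f.
Proof. rewrite /SS; apply: eq_bigr => i _; by rewrite [RHS](reindex_inj (@ord_pred_inj N)). Qed.

Lemma SS_px (F K : G) : SS (fun i j => F i j + K (ord_pred i) j) = SS F + SS K.
Proof. by rewrite SSD SS_Px. Qed.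

Lemma SS_py (F K : G) : SS (fun i j => F i j + K i (ord_pred j)) = SS F + SS K.
Proof. by rewrite SSD SS_Py. Qed.

Lemma F_ineq (N1 N2 chi A dt : R) (p1 p0 pm mu : G) :
  0 < N1 -> 0 < N2 ->
  (forall i j, 0 < p1 i j < (rho N1 N2)^-1) ->
  (forall i j, 0 < p0 i j < (rho N1 N2)^-1) ->
  SS (fun i j => p1 i j - p0 i j) = 0 ->
  (forall i j, mu i j = chempot L N1 N2 chi A dt p1 p0 pm i j) ->
  Fenergy L N1 N2 chi p1 - Fenergy L N1 N2 chi p0 <=
   ip L mu (fun i j => p1 i j - p0 i j)
   - chi * rho N1 N2 * ip L (fun i j => p1 i j - p0 i j) (fun i j => p1 i j - p0 i j)
   + 2 * chi * rho N1 N2 * ip L (fun i j => p0 i j - pm i j) (fun i j => p1 i j - p0 i j)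
   - A * dt * Gf (fun i j => p1 i j - p0 i j) (fun i j => p1 i j - p0 i j).
Proof.
move=> hN1 hN2 b1 b0 mass Hmu.
set d := (fun i j => p1 i j - p0 i j).
set d' := (fun i j => p0 i j - pm i j).
set r := rho N1 N2.
have r1 : 1 < r by exact: (@rho_gt1 R N1 N2 hN1 hN2).
have lt1 : forall x, 0 < x < r^-1 -> 0 < x < 1.
  move=> x /andP[x0 x1]; rewrite x0 /=; apply: (lt_trans x1).
  by rewrite invf_lt1 // (lt_trans ltr01 r1).
have Ddx : forall i j, Dx L d i j = Dx L p1 i j - Dx L p0 i j by move=> i j; rewrite /Dx /d; ring.
have Ddy : forall i j, Dy L d i j = Dy L p1 i j - Dy L p0 i j by move=> i j; rewrite /Dy /d; ring.
pose Base := fun i j =>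
  (Sp N1 N2 (p1 i j) + cS R N1 N2) * d i j + (chi + Hp N1 N2 chi (2 * p0 i j - pm i j)) * d i j
  - chi * r * (d i j * d i j) + 2 * chi * r * (d' i j * d i j)
  + kapp (p1 i j) * gradsq L p1 i j * d i j
  + kap (p1 i j) * (Dx L p1 i j * Dx L d i j + Dy L p1 i j * Dy L d i j).
pose Kx := fun i j => kap (p1 (ordS i) j) * (Dx L p1 i j * Dx L d i j).
pose Ky := fun i j => kap (p1 i (ordS j)) * (Dy L p1 i j * Dy L d i j).
pose RHS := fun i j => Base i j + kap (p1 i j) * (Dx L p1 (ord_pred i) j * Dx L d (ord_pred i) j)
   + kap (p1 i j) * (Dy L p1 i (ord_pred j) * Dy L d i (ord_pred j)).
have pw : forall i j,
  (Sf N1 N2 (p1 i j) + Hf N1 N2 chi (p1 i j) + kap (p1 i j) * gradsq L p1 i j)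
  - (Sf N1 N2 (p0 i j) + Hf N1 N2 chi (p0 i j) + kap (p0 i j) * gradsq L p0 i j) <= RHS i j.
  move=> i j.
  have /andP[a0 a1] := b1 i j; have /andP[c0 c1] := b0 i j.
  have T1 := @S_tangent R N1 N2 hN1 hN2 _ _ a0 a1 c0 c1.
  have K1 := @kap_tangent R _ _ (Dx L p1 i j) (Dx L p0 i j) (lt1 _ (b1 i j)) (lt1 _ (b0 i j)).
  have K2 := @kap_tangent R _ _ (Dx L p1 (ord_pred i) j) (Dx L p0 (ord_pred i) j) (lt1 _ (b1 i j)) (lt1 _ (b0 i j)).
  have K3 := @kap_tangent R _ _ (Dy L p1 i j) (Dy L p0 i j) (lt1 _ (b1 i j)) (lt1 _ (b0 i j)).
  have K4 := @kap_tangent R _ _ (Dy L p1 i (ord_pred j)) (Dy L p0 i (ord_pred j)) (lt1 _ (b1 i j)) (lt1 _ (b0 i j)).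
  have eH : Hf N1 N2 chi (p1 i j) - Hf N1 N2 chi (p0 i j) =
    (chi + Hp N1 N2 chi (2 * p0 i j - pm i j)) * d i j
    - chi * r * (d i j * d i j) + 2 * chi * r * (d' i j * d i j).
    by rewrite /Hf /Hp /d /d' /r; ring.
  rewrite /RHS /Base /gradsq /ax /ay !Ddx !Ddy.
  rewrite /d in T1 eH *.
  lra.
pose X := fun a b => Ax (fun c e => kap (p1 c e)) a b * Dx L p1 a b.
pose Y := fun a b => Ay (fun c e => kap (p1 c e)) a b * Dy L p1 a b.
pose Td := fun i j => (Sp N1 N2 (p1 i j) + kapp (p1 i j) * gradsq L p1 i j
                       + Hp N1 N2 chi (2 * p0 i j - pm i j)) * d i j.
have le1 : Fenergy L N1 N2 chi p1 - Fenergy L N1 N2 chi p0 <= h ^+ 2 * SS RHS.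
  have eF : forall p : G, Fenergy L N1 N2 chi p = h ^+ 2 * SS (fun i j =>
     Sf N1 N2 (p i j) + Hf N1 N2 chi (p i j) + kap (p i j) * gradsq L p i j) by [].
  rewrite !eF -mulrBr -SSB; apply: ler_wpM2l; first exact: sqr_ge0.
  exact: SS_le pw.
have eR : SS RHS = SS Base + SS Kx + SS Ky.
  have -> : RHS = (fun i j => (fun a b => Base a b + Kx (ord_pred a) b) i j + Ky i (ord_pred j)).
    by apply/funext=> i; apply/funext=> j; rewrite /RHS /Kx /Ky /= !ord_predK.
  by rewrite SS_py SS_px.
have eM : SS (fun i j => mu i j * d i j) = SS Td + (-2) * SS (fun i j => dx L X i j * d i j)
   + (-2) * SS (fun i j => dy L Y i j * d i j) + (A * dt) * SS (fun i j => - lap L d i j * d i j).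
  rewrite -!SSZ -!SSD; congr SS; apply/funext=> i; apply/funext=> j.
  by rewrite Hmu /chempot /Td /X /Y /d; ring.
have eC : SS Base + SS Kx + SS Ky = SS Td + 2 * SS (fun i j => X i j * Dx L d i j)
   + 2 * SS (fun i j => Y i j * Dy L d i j) + (- (chi * r)) * SS (fun i j => d i j * d i j)
   + (2 * chi * r) * SS (fun i j => d' i j * d i j) + (cS R N1 N2 + chi) * SS d.
  rewrite -!SSZ -!SSD; congr SS; apply/funext=> i; apply/funext=> j.
  by rewrite /Base /Kx /Ky /Td /X /Y /Ax /Ay; field.
apply: (le_trans le1); rewrite le_eqVlt; apply/orP; left; apply/eqP.
rewrite eR eC mass (ipE mu) eM sbp_x sbp_y -ip_neglap !ipE; ring.
Qed.

Lemma ip_sol (v psi f : G) : (forall i j, - lap L psi i j = v i j) -> ip L v f = Gf psi f.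
Proof.
move=> H; have -> : ip L v f = ip L (fun i j => - lap L psi i j) f.
  by congr ip; apply/funext=> i; apply/funext=> j; rewrite H.
exact: ip_neglap.
Qed.

Lemma ip_lin2 a b (f g k : G) :
  ip L (fun i j => a * f i j + b * g i j) k = a * ip L f k + b * ip L g k.
Proof.
rewrite !ipE; have -> : (fun i j => (a * f i j + b * g i j) * k i j) =
  (fun i j => a * (f i j * k i j) + b * (g i j * k i j)).
  by apply/funext=> i; apply/funext=> j; ring.
rewrite SSD !SSZ; ring.
Qed.

Lemma ip_quad a b (f g : G) :
  ip L (fun i j => a * f i j + b * g i j) (fun i j => a * f i j + b * g i j)
  = a ^+ 2 * ip L f f + 2 * a * b * ip L f g + b ^+ 2 * ip L g g.
Proof.
rewrite !ipE; have -> : (fun i j => (a * f i j + b * g i j) * (a * f i j + b * g i j)) =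
  (fun i j => a ^+ 2 * (f i j * f i j) + 2 * a * b * (f i j * g i j) + b ^+ 2 * (g i j * g i j)).
  by apply/funext=> i; apply/funext=> j; ring.
rewrite !SSD !SSZ; ring.
Qed.

Lemma Gf_quad a b (f g : G) :
  Gf (fun i j => a * f i j + b * g i j) (fun i j => a * f i j + b * g i j)
  = a ^+ 2 * Gf f f + 2 * a * b * Gf f g + b ^+ 2 * Gf g g.
Proof.
rewrite /Gf; have -> : (fun i j =>
   Dx L (fun i0 j0 => a * f i0 j0 + b * g i0 j0) i j * Dx L (fun i0 j0 => a * f i0 j0 + b * g i0 j0) i j +
   Dy L (fun i0 j0 => a * f i0 j0 + b * g i0 j0) i j * Dy L (fun i0 j0 => a * f i0 j0 + b * g i0 j0) i j) =
  (fun i j => a ^+ 2 * (Dx L f i j * Dx L f i j + Dy L f i j * Dy L f i j)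
      + 2 * a * b * (Dx L f i j * Dx L g i j + Dy L f i j * Dy L g i j)
      + b ^+ 2 * (Dx L g i j * Dx L g i j + Dy L g i j * Dy L g i j)).
  by apply/funext=> i; apply/funext=> j; rewrite /Dx /Dy; ring.
rewrite !SSD !SSZ !SSD; ring.
Qed.

Lemma lap_scale c (f : G) i j : lap L (fun x y => c * f x y) i j = c * lap L f i j.
Proof. rewrite /lap /dx /dy /Dx /Dy; ring. Qed.

Lemma energy_step (N1 N2 chi A dt : R) (p1 p0 pm mu psi psi' : G) :
  0 < N1 -> 0 < N2 -> 0 < chi -> chi ^+ 2 * rho N1 N2 ^+ 2 <= A -> 0 < dt ->
  (forall i j, 0 < p1 i j < (rho N1 N2)^-1) -> (forall i j, 0 < p0 i j < (rho N1 N2)^-1) ->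
  SS (fun i j => p1 i j - p0 i j) = 0 ->
  (forall i j, - lap L psi i j = p1 i j - p0 i j) ->
  (forall i j, - lap L psi' i j = p0 i j - pm i j) ->
  (forall i j, (3 * p1 i j - 4 * p0 i j + pm i j) / (2 * dt) = lap L mu i j) ->
  (forall i j, mu i j = chempot L N1 N2 chi A dt p1 p0 pm i j) ->
  Eh L N1 N2 chi dt p1 p0
  + dt * (1 - chi ^+ 2 * rho N1 N2 ^+ 2 / A) * normm1sq L (fun i j => (p1 i j - p0 i j) / dt)
  <= Eh L N1 N2 chi dt p0 pm.
Proof.
move=> hN1 hN2 hchi hA hdt b1 b0 mass Hpsi Hpsi' Hs Hmu.
have Fi := @F_ineq N1 N2 chi A dt p1 p0 pm mu hN1 hN2 b1 b0 mass Hmu.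
have n3 : normm1sq L (fun i j => (p1 i j - p0 i j) / dt) = dt^-1 * dt^-1 * Gf psi psi.
  have Hs3 : forall i j, - lap L (fun x y => dt^-1 * psi x y) i j = (p1 i j - p0 i j) / dt.
    by move=> i j; rewrite lap_scale -Hpsi; ring.
  rewrite (normm1_any _ _ Hs3) ipE.
  have -> : (fun i j => (p1 i j - p0 i j) / dt * (dt^-1 * psi i j)) =
     (fun i j => (dt^-1 * dt^-1) * ((p1 i j - p0 i j) * psi i j)) by apply/funext=> i; apply/funext=> j; ring.
  by rewrite SSZ -(ip_sol _ _ psi Hpsi) ipE; ring.
rewrite n3.
set d := (fun i j => p1 i j - p0 i j) in Fi mass Hpsi Hs Hmu *.
set d' := (fun i j => p0 i j - pm i j) in Fi Hpsi' *.
set r := rho N1 N2 in hA b1 b0 Fi *.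
have n1 : normm1sq L d = Gf psi psi by rewrite (normm1_any _ _ Hpsi) (ip_sol _ _ _ Hpsi).
have n2 : normm1sq L d' = Gf psi' psi' by rewrite (normm1_any _ _ Hpsi') (ip_sol _ _ _ Hpsi').
have dt0 : dt != 0 by rewrite gt_eqF.
have em : ip L mu d = (-3 / (2 * dt)) * Gf psi psi + (1 / (2 * dt)) * Gf psi' psi.
  rewrite ip_sym (ip_sol _ _ _ Hpsi) Gf_sym -ip_neglap.
  have -> : (fun i j => - lap L mu i j) = (fun i j => (-3 / (2 * dt)) * d i j + (1 / (2 * dt)) * d' i j).
    by apply/funext=> i; apply/funext=> j; rewrite -Hs /d /d'; field.
  by rewrite ip_lin2 (ip_sol _ _ _ Hpsi) (ip_sol _ _ _ Hpsi').
rewrite em in Fi.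
have r1 : 1 < r by exact: (@rho_gt1 R N1 N2 hN1 hN2).
have r0 : 0 < r by lra.
have A0 : 0 < A by apply: (lt_le_trans _ hA); rewrite mulr_gt0 // exprn_gt0.
set a := A * dt / (chi * r).
have a0 : 0 < a by rewrite /a divr_gt0 ?mulr_gt0.
have f2 := Gf_ge0 (fun i j => 1 * psi i j + (-1) * psi' i j).
rewrite Gf_quad (Gf_sym psi psi') in f2.
have f3 := ip_ge0 (fun i j => 1 * d i j + (-1) * d' i j).
rewrite ip_quad (ip_sym d d') in f3.
have f4 := Gf_ge0 (fun i j => a * d i j + (-1) * psi i j).
rewrite Gf_quad (Gf_sym d psi) -(ip_sol _ _ d Hpsi) in f4.
have W0 := Gf_ge0 d.
have X0 := Gf_ge0 psi.
rewrite /Eh n1 n2 /norm2sq -/d -/d'.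
set X := Gf psi psi in Fi f2 f4 X0 *.
set Y := Gf psi' psi' in f2 *.
set Z := Gf psi' psi in Fi f2 *.
set W := Gf d d in Fi f4 W0 *.
set P := ip L d d in Fi f3 f4 *.
set Q := ip L d' d' in f3 *.
set M := ip L d' d in Fi f3 *.
set F1 := Fenergy L N1 N2 chi p1 in Fi *.
set F0 := Fenergy L N1 N2 chi p0 in Fi *.
rewrite -/r.
set u := dt^-1.
set c := chi ^+ 2 * r ^+ 2 / A.
have u0 : 0 <= u by rewrite /u invr_ge0 ltW.
have c0 : 0 <= c.
  by apply: divr_ge0; [apply: mulr_ge0; apply: exprn_ge0; apply: ltW | apply: ltW].
have eFi : -3 / (2 * dt) * X + 1 / (2 * dt) * Z = -3/2 * (u * X) + 1/2 * (u * Z).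
  by rewrite /u; field.
rewrite eFi in Fi.
have eG1 : (4 * dt)^-1 * X = 1/4 * (u * X) by rewrite /u; field.
have eG2 : dt * (1 - c) * (dt^-1 / dt * X) = u * X - c * (u * X) by rewrite /u; field.
have eG3 : (4 * dt)^-1 * Y = 1/4 * (u * Y) by rewrite /u; field.
rewrite eG1 eG2 eG3.
have g4 : 0 <= (chi * r / (2 * a)) * (a ^+ 2 * W + 2 * a * -1 * P + (-1) ^+ 2 * X).
  apply: mulr_ge0 => //; apply: divr_ge0; [apply: mulr_ge0; apply: ltW => // | apply: mulr_ge0 => //; apply: ltW].
  done.
have e4 : (chi * r / (2 * a)) * (a ^+ 2 * W + 2 * a * -1 * P + (-1) ^+ 2 * X)
   = (A * dt / 2) * W - chi * r * P + c / 2 * (u * X).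
  rewrite /a /c /u; field.
  by rewrite !gt_eqF ?mulr_gt0.
rewrite e4 in g4.
have f2u : 0 <= u * (1 ^+ 2 * X + 2 * 1 * -1 * Z + (-1) ^+ 2 * Y) by apply: mulr_ge0.
have f3c : 0 <= chi * r * (1 ^+ 2 * P + 2 * 1 * -1 * M + (-1) ^+ 2 * Q).
  by apply: mulr_ge0 => //; apply: mulr_ge0; apply: ltW.
have AW : 0 <= A * dt * W.
  by apply: mulr_ge0 => //; apply: mulr_ge0; apply: ltW.
have cuX : 0 <= c * (u * X).
  by apply: mulr_ge0 => //; apply: mulr_ge0.
lra.
Qed.

Lemma main_inner (N1 N2 chi A dt : R) (phi : nat -> G) :
  0 < N1 -> 0 < N2 -> 0 < chi ->
  chi ^+ 2 * rho N1 N2 ^+ 2 <= A -> 0 < dt ->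
  (forall k i j, 0 < phi k i j /\ phi k i j < (rho N1 N2)^-1) ->
  (forall i j, phi 1%N i j = phi 0%N i j) ->
  (forall k, (1 <= k)%N -> exists mu : G,
     (forall i j, (3 * phi k.+1 i j - 4 * phi k i j + phi k.-1 i j) / (2 * dt)
                  = lap L mu i j) /\
     (forall i j, mu i j
                  = chempot L N1 N2 chi A dt (phi k.+1) (phi k) (phi k.-1) i j)) ->
  forall n, (1 <= n)%N ->
    Eh L N1 N2 chi dt (phi n.+1) (phi n)
    + dt * (1 - chi ^+ 2 * rho N1 N2 ^+ 2 / A)
      * normm1sq L (fun i j => (phi n.+1 i j - phi n i j) / dt)
    <= Eh L N1 N2 chi dt (phi n) (phi n.-1).
Proof.
move=> hN1 hN2 hchi hA hdt Hb H10 Hsch.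
have dt0 : dt != 0 by rewrite gt_eqF.
have key : forall m, exists psi : G,
   (forall i j, - lap L psi i j = phi m.+1 i j - phi m i j) /\
   SS (fun i j => phi m.+1 i j - phi m i j) = 0.
  elim=> [|m [psi [Hp Hm]]].
    exists (fun _ _ => 0); split.
      by move=> i j; rewrite H10 subrr /lap /dx /dy /Dx /Dy; ring.
    have -> : (fun i j => phi 1%N i j - phi 0%N i j) = (fun _ _ => 0).
      by apply/funext=> i; apply/funext=> j; rewrite H10 subrr.
    by rewrite SS_const !mul0r.
  have [mu [Hs _]] := Hsch m.+1 (ltn0Sn m).
  simpl in Hs.
  exists (fun x y => 3^-1 * psi x y + (-(2 * dt / 3)) * mu x y); split.
    move=> i j; rewrite lap_lin -Hs.
    have Hp' : lap L psi i j = - (phi m.+1 i j - phi m i j) by rewrite -Hp opprK.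
    by rewrite Hp'; field; exact: dt0.
  have -> : (fun i j => phi m.+2 i j - phi m.+1 i j) =
     (fun i j => (2 * dt / 3) * lap L mu i j + 3^-1 * (phi m.+1 i j - phi m i j)).
    by apply/funext=> i; apply/funext=> j; rewrite -Hs; field; exact: dt0.
  by rewrite SSD !SSZ SS_lap Hm; ring.
case=> [//|n] _.
have [psi [Hp Hm]] := key n.+1.
have [psi' [Hp' _]] := key n.
have [mu [Hs Hmu]] := Hsch n.+1 (ltn0Sn n).
simpl in Hs, Hmu |- *.
have bd : forall k i j, 0 < phi k i j < (rho N1 N2)^-1.
  by move=> k i j; have [h1 h2] := Hb k i j; rewrite h1 h2.
exact: (@energy_step N1 N2 chi A dt _ _ _ mu psi psi' hN1 hN2 hchi hA hdt (bd _) (bd _) Hm Hp Hp' Hs Hmu).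
Qed.

End GridLemmas.

Theorem theorem5p1 (R : realType) (N : nat) (L N1 N2 chi A dt : R)
  (phi : nat -> grid R N) :
  (0 < N)%N -> 0 < L -> 0 < N1 -> 0 < N2 -> 0 < chi ->
  chi ^+ 2 * rho N1 N2 ^+ 2 <= A -> 0 < dt ->
  (forall k i j, 0 < phi k i j /\ phi k i j < (rho N1 N2)^-1) ->
  (forall i j, phi 1%N i j = phi 0%N i j) ->
  (forall k, (1 <= k)%N -> exists mu : grid R N,
     (forall i j, (3 * phi k.+1 i j - 4 * phi k i j + phi k.-1 i j) / (2 * dt)
                  = lap L mu i j) /\
     (forall i j, mu i j
                  = chempot L N1 N2 chi A dt (phi k.+1) (phi k) (phi k.-1) i j)) ->
  forall n, (1 <= n)%N ->
    Eh L N1 N2 chi dt (phi n.+1) (phi n)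
    + dt * (1 - chi ^+ 2 * rho N1 N2 ^+ 2 / A)
      * normm1sq L (fun i j => (phi n.+1 i j - phi n i j) / dt)
    <= Eh L N1 N2 chi dt (phi n) (phi n.-1).
Proof.
move=> hN hL hN1 hN2 hchi hA hdt Hb H10 Hsch n hn.
exact: (@main_inner R N L hN N1 N2 chi A dt phi hN1 hN2 hchi hA hdt Hb H10 Hsch n hn).
Qed.
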